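(* (1) For disjoint finite $X,Y$, $f\in\mathrm{Bool}(X)$, $g\in\mathrm{Bool}(Y)$: $\mathcal{E}^S(f\star_1g)=\{\sim_X\sqcup\sim_Y\mid\sim_X\in\mathcal{E}^S(f),\ \sim_Y\in\mathcal{E}^S(g)\}$. (2) For $f\in\mathrm{Bool}(X)$ and equivalences $\sim\subseteq\sim'$ on $X$, the following are equivalent: (a) $\sim\in\mathcal{E}^S(f)$ and $\overline{\sim'}\in\mathcal{E}^S(f/{\sim})$; (b) $\sim'\in\mathcal{E}^S(f)$ and $\sim\in\mathcal{E}^S(f\mid\sim')$. (3) For $f\in\mathrm{Bool}(X)$: $=_X$ and $\sim_f^i$ belong to $\mathcal{E}^S(f)$; for $\sim\in\mathcal{E}^S(f)$, $f\mid\sim$ is modular iff $\sim$ is $=_X$, and $f/{\sim}$ is modular iff $\sim=\sim_f^i$. (4) The analogue of the restriction property fails: there exist finite disjoint $X,Y$, $f\in\mathrm{Bool}(X\sqcup Y)$ and equivalences $\sim_X,\sim_Y$ such that $\sim_X\in\mathcal{E}^S(f_{\mid X})$, $\sim_Y\in\mathcal{E}^S(f_{\mid Y})$ but $\sim_X\sqcup\sim_Y\notin\mathcal{E}^S(f)$, and also examples where $\sim_X\sqcup\sim_Y\in\mathcal{E}^S(f)$ but $\sim_X\notin\mathcal{E}^S(f_{\mid X})$.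
   Context: A boolean function on a finite set $X$ is a map $f:\mathcal{P}(X)\to\mathbb{Z}$ with $f(\emptyset)=0$; $\mathrm{Bool}(X)$ is their set; $f_{\mid Y}$ is the restriction to $\mathcal{P}(Y)$. For disjoint $X,Y$, $(f\star_1g)(A)=f(A\cap X)+g(A\cap Y)$ (associative, commutative, unit $1\in\mathrm{Bool}(\emptyset)$). For nonempty $X$, $f$ is indecomposable if $f=f'\star_1f''$ with $f'\in\mathrm{Bool}(X\setminus Y)$, $f''\in\mathrm{Bool}(Y)$ forces $Y\in\{\emptyset,X\}$. Each $f$ determines a unique equivalence $\sim_f^i$ with $f=\prod^{\star_1}_{Y\in X/\sim_f^i}f_{\mid Y}$ and each $f_{\mid Y}$ indecomposable; $\mathrm{ic}(f)=|X/\sim_f^i|$. $f$ is modular if $f(A)=\sum_{x\in A}f(\{x\})$ for all $A$. For an equivalence $\sim$ on $X$: $\mathrm{cl}(\sim)=|X/{\sim}|$, $\varpi_\sim$ the canonical surjection, $f/{\sim}(A)=f(\varpi_\sim^{-1}(A))$, $(f\mid\sim)(A)=\sum_{Y\in X/\sim}f(A\cap Y)$. If $\sim\subseteq\sim'$, $\overline{\sim'}$ is the equivalence on $X/{\sim}$ with $\varpi_\sim(x)\,\overline{\sim'}\,\varpi_\sim(y)\iff x\sim'y$. $=_X$ is the equality relation. $\mathcal{E}^W(f)=\{\sim:\mathrm{ic}(f\mid\sim)=\mathrm{cl}(\sim)\}$ and $\mathcal{E}^S(f)=\{\sim\in\mathcal{E}^W(f):\mathrm{ic}(f/{\sim})=\mathrm{ic}(f)\}$.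 *)

(* Defs.v *)
From HB Require Import structures.
From mathcomp Require Import all_boot all_order all_algebra.
From Stdlib Require Import ClassicalEpsilon.
Set Implicit Arguments.
Unset Strict Implicit.
Unset Printing Implicit Defensive.
Import GRing.Theory Num.Theory.
Local Open Scope ring_scope.

(* A finite set X is a finType; a boolean function on X is a map
   f : {set X} -> int with f set0 = 0.  Equivalence relations on X are
   represented by the corresponding partitions P of [set: X]. *)

Definition boolf (X : finType) (f : {set X} -> int) : Prop := f set0 = 0.

Definition star1 (X Y : finType) (f : {set X} -> int) (g : {set Y} -> int)
  : {set (X + Y)%type} -> int :=
  fun A => f (inl @^-1: A) + g (inr @^-1: A).

Definition restrL (X Y : finType) (f : {set (X + Y)%type} -> int) : {set X} -> int :=
  fun B => f (inl @: B).
Definition restrR (X Y : finType) (f : {set (X + Y)%type} -> int) : {set Y} -> int :=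
  fun B => f (inr @: B).

Section Defs.
Variable X : finType.
Implicit Types (f : {set X} -> int) (S Y : {set X}) (P : {set {set X}}).

(* f_{|S} = f' *_1 f'' with f' in Bool(S \ Y), f'' in Bool(Y)
   (functions on subsets of S\Y, resp. Y, represented by functions on {set X}) *)
Definition decomp_on S Y f : Prop :=
  exists f' f'' : {set X} -> int, f' set0 = 0 /\ f'' set0 = 0 /\
    forall A : {set X}, A \subset S -> f A = f' (A :\: Y) + f'' (A :&: Y).

Definition indec_on S f : Prop :=
  S != set0 /\ forall Y, Y \subset S -> decomp_on S Y f -> Y = set0 \/ Y = S.

Definition is_icpart f P : Prop :=
  [/\ partition P [set: X],
      (forall A : {set X}, f A = \sum_(Y in P) f (A :&: Y)) &
      (forall Y, Y \in P -> indec_on Y f)].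

(* ~_f^i (unique by the paper; chosen by Hilbert's epsilon) *)
Definition icpart f : {set {set X}} := epsilon (inhabits set0) (is_icpart f).
Definition ic f : nat := #|icpart f|.

Definition modular f : Prop := forall A : {set X}, f A = \sum_(x in A) f [set x].

Definition eqpart : {set {set X}} := [set [set x] | x : X].

Definition restr_part f P : {set X} -> int := fun A => \sum_(Y in P) f (A :&: Y).

Definition qT P := {C : {set X} | C \in P}.

Definition fquot P f : {set qT P} -> int := fun A => f (\bigcup_(c in A) val c).


Definition refines P P' : Prop := forall C, C \in P -> exists D, D \in P' /\ C \subset D.

Definition qpart P P' : {set {set qT P}} :=
  [set [set c : qT P | val c \subset D] | D : {set X} in P'].

End Defs.
Arguments fquot {X} P f.
Arguments qpart {X} P P'.
Arguments eqpart X.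

Definition EW (X : finType) (f : {set X} -> int) (P : {set {set X}}) : Prop :=
  partition P [set: X] /\ ic (restr_part f P) = #|P|.
Definition ES (X : finType) (f : {set X} -> int) (P : {set {set X}}) : Prop :=
  EW f P /\ ic (fquot P f) = ic f.

Definition dunion (X Y : finType) (PX : {set {set X}}) (PY : {set {set Y}})
  : {set {set (X + Y)%type}} :=
  [set inl @: C | C : {set X} in PX] :|: [set inr @: C | C : {set Y} in PY].

(* Main.v *)
Require Import Defs.
From HB Require Import structures.
From mathcomp Require Import all_boot all_order all_algebra.
From mathcomp Require Import zify.
From Stdlib Require Import ClassicalEpsilon.
Set Implicit Arguments.
Unset Strict Implicit.
Unset Printing Implicit Defensive.
Import GRing.Theory Num.Theory.
Local Open Scope ring_scope.

Section Part.
Variable T : finType.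
Implicit Types (P Q R : {set {set T}}) (A B C D : {set T}).

Lemma partP P : partition P [set: T] <->
  [/\ forall x, exists2 C, C \in P & x \in C,
      forall C D x, C \in P -> D \in P -> x \in C -> x \in D -> C = D &
      set0 \notin P].
Proof.
split.
  move=> pP; split.
  - move=> x; have : x \in cover P by rewrite (cover_partition pP).
    by case/bigcupP=> C CP xC; exists C.
  - move=> C D x CP DP xC xD; apply/eqP; apply: contraT => neCD.
    move/trivIsetP: (partition_trivIset pP) => tI.
    by move: (tI C D CP DP neCD) => /disjointFr /(_ xC); rewrite xD.
  - by rewrite (partition0 pP).
case=> cov dis n0; apply/and3P; split => //.
  apply/eqP/setP=> x; rewrite inE; apply/bigcupP.
  by case: (cov x) => C CP xC; exists C.
apply/trivIsetP=> C D CP DP neCD; rewrite -setI_eq0; apply/eqP/setP=> x.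
rewrite !inE; apply: negbTE; apply/negP=> /andP[xC xD].
by move/eqP: neCD; apply; apply: (dis C D x).
Qed.

Lemma part_ne0 P C : partition P [set: T] -> C \in P -> C != set0.
Proof. by move=> pP CP; apply: (partition_neq0 pP CP). Qed.

Lemma part_sub_eq Q R : partition Q [set: T] -> partition R [set: T] ->
  Q \subset R -> Q = R.
Proof.
move=> /partP[cQ dQ nQ] /partP[cR dR nR] sQR; apply/eqP; rewrite eqEsubset sQR /=.
apply/subsetP=> r rR; have : r != set0 by apply: contraNneq nR => <-.
case/set0Pn=> x xr; case: (cQ x) => q qQ xq.
have qR := subsetP sQR _ qQ.
by rewrite (dR r q x rR qR xr xq).
Qed.

Lemma part_ref Q R : partition Q [set: T] -> partition R [set: T] ->
  (forall q, q \in Q -> exists2 r, r \in R & q \subset r) ->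
  (#|R| <= #|Q|)%N /\ ((#|Q| <= #|R|)%N -> Q = R).
Proof.
move=> pQ pR ref; have [cQ dQ nQ] := (partP Q).1 pQ; have [cR dR nR] := (partP R).1 pR.
pose h (q : {set T}) := oapp (pblock R) set0 [pick x in q].
have hq q : q \in Q -> h q \in R /\ q \subset h q.
  move=> qQ; case: (ref q qQ) => r rR sqr.
  have : q != set0 by apply: contraNneq nQ => <-.
  move=> /set0Pn[y yq]; rewrite /h; case: pickP => [z zq|/(_ y)]; last by rewrite yq.
  by rewrite /= (def_pblock (partition_trivIset pR) rR (subsetP sqr _ zq)).
have eR : R = h @: Q.
  apply/eqP; rewrite eqEsubset; apply/andP; split; last first.
    by apply/subsetP=> _ /imsetP[q qQ ->]; case: (hq q qQ).
  apply/subsetP=> r rR; have : r != set0 by apply: contraNneq nR => <-.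
  case/set0Pn=> x xr; case: (cQ x) => q qQ xq.
  case: (hq q qQ) => hR sq; apply/imsetP; exists q => //.
  by apply: (dR r (h q) x) => //; apply: (subsetP sq).
split; first by rewrite eR leq_imset_card.
move=> le; have inj : {in Q &, injective h}.
  apply/imset_injP; rewrite eqn_leq leq_imset_card /= -eR //.
apply: part_sub_eq => //; apply/subsetP=> q qQ.
case: (hq q qQ) => hR sq; suff -> : q = h q by [].
apply/eqP; rewrite eqEsubset sq /=; apply/subsetP=> y yh.
case: (cQ y) => q' q'Q yq'; case: (hq q' q'Q) => h'R sq'.
have := dR _ _ y hR h'R yh (subsetP sq' _ yq').
by move/(inj _ _ qQ q'Q) => ->.
Qed.

End Part.

Ltac bcase := (repeat match goal with |- context [?x \in ?A] => case: (x \in A) end); first [by [] | by move=> /(_ isT) | by move=> _ | by move=> _ _ | by move=> /(_ isT) _ | by move=> _ /(_ isT)].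
Ltac sd := apply/setP => ?; rewrite !inE; bcase.

Section Sep.
Variable T : finType.
Implicit Types (f : {set T} -> int) (A B S Y Z U : {set T}).

Definition sep f Z := forall A, f A = f (A :\: Z) + f (A :&: Z).
Definition locsep f S Z := forall A, A \subset S -> f A = f (A :\: Z) + f (A :&: Z).
Definition indecl f S := S != set0 /\
  forall Z, Z \subset S -> locsep f S Z -> Z = set0 \/ Z = S.
Definition sepb f Z := [forall A, f A == f (A :\: Z) + f (A :&: Z)].
Lemma sepP f Z : reflect (sep f Z) (sepb f Z).
Proof. by apply: (iffP forallP) => h A; apply/eqP. Qed.

Definition atoms f := [set Y | [&& Y != set0, sepb f Y &
   [forall Z : {set T}, (Z \subset Y) ==> sepb f Z ==> (Z == set0) || (Z == Y)]]].

Lemma atomsP f Y : reflect [/\ Y != set0, sep f Y &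
   forall Z, Z \subset Y -> sep f Z -> Z = set0 \/ Z = Y] (Y \in atoms f).
Proof.
rewrite inE; apply: (iffP and3P) => [[n0 /sepP s /forallP m]|[n0 s m]]; split => //.
- move=> Z sZ /sepP sZ'; move: (m Z); rewrite sZ sZ' /=.
  by case/orP => /eqP; [left|right].
- exact/sepP.
- apply/forallP => Z; apply/implyP => sZ; apply/implyP => /sepP sZ'.
  by case: (m Z sZ sZ') => ->; rewrite eqxx ?orbT.
Qed.

Variable f : {set T} -> int.
Hypothesis f0 : f set0 = 0.

Lemma sep0 : sep f set0.
Proof. by move=> A; rewrite setD0 setI0 f0 addr0. Qed.
Lemma sepT : sep f setT.
Proof. by move=> A; rewrite setDT setIT f0 add0r. Qed.
Lemma sepC Z : sep f Z -> sep f (~: Z).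
Proof. by move=> s A; rewrite setDE setCK -setDE addrC. Qed.
Lemma sepI Y Z : sep f Y -> sep f Z -> sep f (Y :&: Z).
Proof.
move=> sY sZ A; rewrite (sY A) (sZ (A :&: Y)) (sY (A :\: (Y :&: Z))).
have -> : (A :\: (Y :&: Z)) :\: Y = A :\: Y by sd.
have -> : (A :\: (Y :&: Z)) :&: Y = A :&: Y :\: Z by sd.
have -> : A :&: (Y :&: Z) = A :&: Y :&: Z by sd.
by rewrite addrA.
Qed.
Lemma sepU Y Z : sep f Y -> sep f Z -> sep f (Y :|: Z).
Proof.
move=> sY sZ; have -> : Y :|: Z = ~: (~: Y :&: ~: Z) by sd.
by apply/sepC/sepI; apply: sepC.
Qed.
Lemma sepD Y Z : sep f Y -> sep f Z -> sep f (Y :\: Z).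
Proof. by move=> sY sZ; rewrite setDE; apply/sepI/sepC. Qed.

Lemma sep_bigcap (I : finType) (P : pred I) (F : I -> {set T}) :
  (forall i, P i -> sep f (F i)) -> sep f (\bigcap_(i | P i) F i).
Proof.
move=> h; elim/big_rec: _ => [|i X Pi sX]; first exact: sepT.
by apply: sepI => //; apply: h.
Qed.
Lemma sep_bigcup (I : finType) (P : pred I) (F : I -> {set T}) :
  (forall i, P i -> sep f (F i)) -> sep f (\bigcup_(i | P i) F i).
Proof.
move=> h; elim/big_rec: _ => [|i X Pi sX]; first exact: sep0.
by apply: sepU => //; apply: h.
Qed.

Lemma sep_loc S Z : sep f Z -> locsep f S Z.
Proof. by move=> s A _; apply: s. Qed.

Lemma locsepS S S' Z : S' \subset S -> locsep f S Z -> locsep f S' Z.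
Proof. by move=> sS l A sA; apply: l; apply: subset_trans sS. Qed.

Lemma loc_glob Y Z : sep f Y -> Z \subset Y -> locsep f Y Z -> sep f Z.
Proof.
move=> sY sZY l A; move/subsetP: sZY => sZY.
rewrite (sY A) (l (A :&: Y)) ?subsetIr // (sY (A :\: Z)).
have -> : (A :\: Z) :\: Y = A :\: Y.
  by apply/setP=> x; move: (sZY x); rewrite !inE; bcase.
have -> : (A :\: Z) :&: Y = A :&: Y :\: Z by sd.
have -> : A :&: Y :&: Z = A :&: Z.
  by apply/setP=> x; move: (sZY x); rewrite !inE; bcase.
by rewrite addrA.
Qed.

Lemma atom_indecl Y : Y \in atoms f -> indecl f Y.
Proof.
case/atomsP=> n0 sY m; split => // Z sZ l; apply: m => //.
exact: (loc_glob sY).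
Qed.

Lemma sep_indecl_atom Y : sep f Y -> indecl f Y -> Y \in atoms f.
Proof.
move=> sY [n0 m]; apply/atomsP; split => // Z sZ sZ'.
by apply: m => //; apply: sep_loc.
Qed.

Definition cls x := \bigcap_(Z | sepb f Z && (x \in Z)) Z.

Lemma cls_in x : x \in cls x.
Proof. by apply/bigcapP => Z /andP[]. Qed.
Lemma cls_sep x : sep f (cls x).
Proof. by apply: sep_bigcap => Z /andP[/sepP]. Qed.
Lemma cls_min x Z : sep f Z -> x \in Z -> cls x \subset Z.
Proof. by move=> sZ xZ; apply: bigcap_inf; rewrite xZ andbT; apply/sepP. Qed.

Lemma cls_atom x : cls x \in atoms f.
Proof.
apply/atomsP; split; first by apply/set0Pn; exists x; apply: cls_in.
  exact: cls_sep.
move=> Z sZ sepZ; case xZ: (x \in Z).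
  right; apply/eqP; rewrite eqEsubset sZ /=; exact: cls_min.
left; have : cls x \subset cls x :\: Z.
  apply: cls_min; first by apply: sepD => //; apply: cls_sep.
  by rewrite inE xZ cls_in.
move/subsetP=> h; apply/setP=> y; rewrite inE; apply/negbTE/negP => yZ.
by move: (h y (subsetP sZ y yZ)); rewrite inE yZ.
Qed.

Lemma atom_cls Y x : Y \in atoms f -> x \in Y -> Y = cls x.
Proof.
case/atomsP => n0 sY m xY; have s := cls_min sY xY.
case: (m _ s (cls_sep x)) => // e.
by move: (cls_in x); rewrite e inE.
Qed.

Lemma atoms_part : partition (atoms f) [set: T].
Proof.
apply/partP; split.
- by move=> x; exists (cls x); [apply: cls_atom | apply: cls_in].
- move=> C D x CA DA xC xD.
  by rewrite (atom_cls CA xC) (atom_cls DA xD).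
- by apply/negP => /atomsP[]; rewrite eqxx.
Qed.

End Sep.

Section Ic.
Variable T : finType.
Implicit Types (f g : {set T} -> int) (A B C D V S Y Z U : {set T}) (P Q : {set {set T}}).

Lemma sep_sum f Q : f set0 = 0 -> partition Q [set: T] ->
  (forall Y, Y \in Q -> sep f Y) -> forall A, f A = \sum_(Y in Q) f (A :&: Y).
Proof.
move=> f0 pQ sQ A; have [cQ dQ nQ] := (partP Q).1 pQ.
suff h : forall n (R : {set {set T}}), #|R| = n -> R \subset Q ->
    f (A :&: \bigcup_(Y in R) Y) = \sum_(Y in R) f (A :&: Y).
  rewrite -(h _ Q erefl (subxx _)); congr f; apply/setP=> x; rewrite !inE.
  case: (x \in A) => //=; case: (cQ x) => C CQ xC; symmetry.
  by apply/bigcupP; exists C.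
elim=> [|n IH] R cR sRQ.
  by move/cards0_eq: cR => ->; rewrite !big_set0 setI0 f0.
have : R != set0 by apply/negP=> /eqP e; move: cR; rewrite e cards0.
case/set0Pn=> Y YR; rewrite (big_setD1 _ YR) /= (big_setD1 _ YR) /=.
rewrite (sQ Y (subsetP sRQ _ YR)).
set U' := \bigcup_(i in R :\ Y) i.
have dU : forall x, x \in U' -> x \notin Y.
  move=> x /bigcupP[Y' /setD1P[ne Y'R] xY']; apply/negP=> xY.
  by move/eqP: ne; apply; apply: (dQ Y' Y x) => //; apply: (subsetP sRQ).
have -> : A :&: (Y :|: U') :\: Y = A :&: U'.
  by apply/setP=> x; move: (dU x); rewrite !inE; bcase.
have -> : A :&: (Y :|: U') :&: Y = A :&: Y by sd.
rewrite addrC (IH (R :\ Y)) //; last by apply: subset_trans sRQ; apply: subsetDl.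
by rewrite (cardsD1 Y) YR in cR; case: cR.
Qed.

Lemma sum_sep f Q : f set0 = 0 -> partition Q [set: T] ->
  (forall A, f A = \sum_(Y in Q) f (A :&: Y)) -> forall Y, Y \in Q -> sep f Y.
Proof.
move=> f0 pQ hs Y YQ A; have [cQ dQ nQ] := (partP Q).1 pQ.
rewrite (hs A) (hs (A :\: Y)) (hs (A :&: Y)) -big_split /=.
apply: eq_bigr => Y' Y'Q; case: (eqVneq Y' Y) => [->|ne].
  have -> : (A :\: Y) :&: Y = set0 by sd.
  have -> : A :&: Y :&: Y = A :&: Y by sd.
  by rewrite f0 add0r.
have d : forall x, x \in Y' -> x \notin Y.
  by move=> x xY'; apply/negP=> xY; move/eqP: ne; apply; apply: (dQ Y' Y x).
have -> : (A :\: Y) :&: Y' = A :&: Y'.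
  by apply/setP=> x; move: (d x); rewrite !inE; bcase.
have -> : A :&: Y :&: Y' = set0.
  by apply/setP=> x; move: (d x); rewrite !inE; bcase.
by rewrite f0 addr0.
Qed.

Lemma decomp_loc f S Z : f set0 = 0 -> decomp_on S Z f -> locsep f S Z.
Proof.
move=> f0 [f' [f'' [h1 [h2 h]]]] A sA.
rewrite (h A sA) (h (A :\: Z)); last by apply: subset_trans sA; apply: subsetDl.
rewrite (h (A :&: Z)); last by apply: subset_trans sA; apply: subsetIl.
have -> : A :\: Z :\: Z = A :\: Z by sd.
have -> : (A :\: Z) :&: Z = set0 by sd.
have -> : A :&: Z :\: Z = set0 by sd.
have -> : A :&: Z :&: Z = A :&: Z by sd.
by rewrite h1 h2 addr0 add0r.
Qed.

Lemma loc_decomp f S Z : f set0 = 0 -> locsep f S Z -> decomp_on S Z f.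
Proof. by move=> f0 l; exists f, f; split => //; split. Qed.

Lemma indec_onE f S : f set0 = 0 -> indec_on S f <-> indecl f S.
Proof.
move=> f0; split=> [[n0 h]|[n0 h]]; split => // Z sZ.
  by move=> l; apply: h => //; apply: loc_decomp.
by move=> d; apply: h => //; apply: decomp_loc.
Qed.

Lemma icpart_atoms f : f set0 = 0 -> icpart f = atoms f.
Proof.
move=> f0; have ex : exists Q, is_icpart f Q.
  exists (atoms f); split; first exact: atoms_part.
    apply: sep_sum => //; first exact: atoms_part.
    by move=> Y /atomsP[].
  by move=> Y YA; apply/indec_onE => //; apply: atom_indecl.
have [pQ hs hi] := epsilon_spec (inhabits set0) (is_icpart f) ex.
rewrite -/(icpart f) in pQ hs hi.
apply: part_sub_eq => //; first exact: atoms_part.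
apply/subsetP=> Y YQ; apply: sep_indecl_atom => //.
  exact: (sum_sep f0 pQ hs).
by apply/indec_onE => //; apply: hi.
Qed.

Lemma icE f : f set0 = 0 -> ic f = #|atoms f|.
Proof. by move=> f0; rewrite /ic icpart_atoms. Qed.

Lemma restr0 f P : f set0 = 0 -> restr_part f P set0 = 0.
Proof. by move=> f0; rewrite /restr_part big1 // => Y _; rewrite set0I. Qed.

Lemma restr_split f P D V A : f set0 = 0 -> partition P [set: T] -> D \in P ->
  V \subset D -> f (A :&: D) = f ((A :&: D) :\: V) + f ((A :&: D) :&: V) ->
  restr_part f P A = restr_part f P (A :\: V) + restr_part f P (A :&: V).
Proof.
move=> f0 pP DP sVD e; have [cP dP nP] := (partP P).1 pP.
rewrite /restr_part -big_split /=; apply: eq_bigr => D' D'P.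
case: (eqVneq D' D) => [->|ne].
  rewrite e; congr (f _ + f _); sd.
have d : forall x, x \in V -> x \notin D'.
  move=> x xV; apply/negP=> xD'; move/eqP: ne; apply; apply: (dP D' D x) => //.
  exact: (subsetP sVD).
have -> : (A :\: V) :&: D' = A :&: D'.
  by apply/setP=> x; move: (d x); rewrite !inE; bcase.
have -> : A :&: V :&: D' = set0.
  by apply/setP=> x; move: (d x); rewrite !inE; bcase.
by rewrite f0 addr0.
Qed.

Lemma restr_in f P C A : f set0 = 0 -> partition P [set: T] -> C \in P ->
  A \subset C -> restr_part f P A = f A.
Proof.
move=> f0 pP CP sAC; have [cP dP nP] := (partP P).1 pP.
rewrite /restr_part (big_setD1 _ CP) /= big1 ?addr0.
  by congr f; apply/setIidPl.
move=> D /setD1P[ne DP]; rewrite -f0; congr f; apply/setP=> x; rewrite !inE.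
apply/negbTE/negP=> /andP[xA xD]; move/eqP: ne; apply; apply: (dP D C x) => //.
exact: (subsetP sAC).
Qed.

Lemma locsep_eq f g S Z : (forall A, A \subset S -> g A = f A) ->
  locsep g S Z <-> locsep f S Z.
Proof.
move=> e; have sD A : A \subset S -> A :\: Z \subset S.
  by move=> sA; apply: subset_trans sA; apply: subsetDl.
have sI A : A \subset S -> A :&: Z \subset S.
  by move=> sA; apply: subset_trans sA; apply: subsetIl.
split=> l A sA.
  by rewrite -(e A sA) -(e _ (sD A sA)) -(e _ (sI A sA)) l.
by rewrite (e A sA) (e _ (sD A sA)) (e _ (sI A sA)) l.
Qed.

Lemma indecl_eq f g S : (forall A, A \subset S -> g A = f A) ->
  indecl g S <-> indecl f S.
Proof.
move=> e; split=> [[n0 h]|[n0 h]]; split => // Z sZ l; apply: h => //.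
  exact: (proj2 (locsep_eq Z e) l).
exact: (proj1 (locsep_eq Z e) l).
Qed.

Lemma restr_blk_sep f P C : f set0 = 0 -> partition P [set: T] -> C \in P ->
  sep (restr_part f P) C.
Proof.
move=> f0 pP CP A; apply: (@restr_split f P C C A f0 pP CP (subxx C)).
have -> : A :&: C :\: C = set0 by sd.
have -> : A :&: C :&: C = A :&: C by sd.
by rewrite f0 add0r.
Qed.

Lemma atom_sub_sep f Y U : f set0 = 0 -> Y \in atoms f -> sep f U ->
  Y \subset U \/ Y \subset ~: U.
Proof.
move=> f0 /atomsP[n0 sY m] sU.
case: (m (Y :&: U)) => //; first exact: subsetIl.
- by apply: sepI.
- move=> e; right; apply/subsetP=> x xY; rewrite inE; apply/negP=> xU.
  have h : x \in Y :&: U by rewrite inE xY xU.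
  by rewrite e inE in h.
- by move=> e; left; rewrite -e subsetIr.
Qed.

Lemma atoms_refine f P : f set0 = 0 -> partition P [set: T] ->
  (forall C, C \in P -> sep f C) ->
  forall a, a \in atoms f -> exists2 C, C \in P & a \subset C.
Proof.
move=> f0 pP sP a aA; have [cP dP nP] := (partP P).1 pP.
have := aA; case/atomsP => /set0Pn[x xa] _ _.
case: (cP x) => C CP xC; exists C => //.
case: (atom_sub_sep f0 aA (sP C CP)) => // s.
by move: (subsetP s x xa); rewrite inE xC.
Qed.

Lemma EWE f P : f set0 = 0 ->
  EW f P <-> partition P [set: T] /\ (forall C, C \in P -> indecl f C).
Proof.
move=> f0; set g := restr_part f P.
have g0 : g set0 = 0 by apply: restr0.
have eqin : partition P [set: T] -> forall C, C \in P ->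
    forall A, A \subset C -> g A = f A.
  by move=> pP C CP A sA; exact: (restr_in f0 pP CP sA).
split.
  case=> pP; rewrite (icE g0) => e; split => // C CP.
  have [_ h] := part_ref (atoms_part g0) pP
    (atoms_refine g0 pP (fun C CP => restr_blk_sep f0 pP CP)).
  have eA : atoms g = P by apply: h; rewrite e.
  by apply/(indecl_eq (eqin pP C CP)); apply: atom_indecl => //; rewrite eA.
case=> pP hi; split => //; rewrite (icE g0).
suff -> : atoms g = P by [].
symmetry; apply: part_sub_eq => //; first exact: atoms_part.
apply/subsetP=> C CP; apply: sep_indecl_atom => //.
  exact: restr_blk_sep.
by apply/(indecl_eq (eqin pP C CP)); apply: hi.
Qed.

End Ic.

Section PDefs.
Variable T : finType.
Implicit Types (f : {set T} -> int) (A S Z U : {set T}) (P : {set {set T}}).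
Definition sat P U := forall C, C \in P -> C \subset U \/ C \subset ~: U.
Definition psep f P U := forall A, sat P A -> f A = f (A :\: U) + f (A :&: U).
Definition plocsep f P S U :=
  forall A, sat P A -> A \subset S -> f A = f (A :\: U) + f (A :&: U).
Definition pindecl f P S := S != set0 /\
  forall Z, sat P Z -> Z \subset S -> plocsep f P S Z -> Z = set0 \/ Z = S.
Definition qlift f P := forall U, sat P U -> psep f P U -> sep f U.
End PDefs.

Section Quot.
Variable T : finType.
Variable P : {set {set T}}.
Hypothesis pP : partition P [set: T].
Implicit Types (f : {set T} -> int) (A B U : {set T}) (c d : qT P).

Definition Phi (S : {set qT P}) : {set T} := \bigcup_(c in S) val c.
Definition pre U : {set qT P} := [set c : qT P | val c \subset U].

Lemma blk_in c : val c \in P.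
Proof. exact: valP. Qed.
Lemma blk_ne0 c : val c != set0.
Proof. exact: (part_ne0 pP (blk_in c)). Qed.
Lemma blk_disj c d x : x \in val c -> x \in val d -> c = d.
Proof.
move=> xc xd; apply: val_inj; have [_ dP _] := (partP P).1 pP.
exact: (dP _ _ x (blk_in c) (blk_in d)).
Qed.
Lemma blk_ex x : exists c : qT P, x \in val c.
Proof.
have [cP _ _] := (partP P).1 pP; case: (cP x) => C CP xC.
by exists (exist _ C CP).
Qed.

Lemma inPhi x (S : {set qT P}) : reflect (exists2 c, c \in S & x \in val c) (x \in Phi S).
Proof. by apply: (iffP bigcupP) => [[c cS xc]|[c cS xc]]; exists c. Qed.

Lemma inPhiE x c (S : {set qT P}) : x \in val c -> (x \in Phi S) = (c \in S).
Proof.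
move=> xc; apply/inPhi/idP => [[d dS xd]|cS]; last by exists c.
by rewrite (blk_disj xc xd).
Qed.

Lemma PhiI (S S' : {set qT P}) : Phi (S :&: S') = Phi S :&: Phi S'.
Proof.
apply/setP=> x; case: (blk_ex x) => c xc.
by rewrite inE !(inPhiE _ xc) inE.
Qed.
Lemma PhiD (S S' : {set qT P}) : Phi (S :\: S') = Phi S :\: Phi S'.
Proof.
apply/setP=> x; case: (blk_ex x) => c xc.
by rewrite inE !(inPhiE _ xc) inE andbC.
Qed.
Lemma PhiU (S S' : {set qT P}) : Phi (S :|: S') = Phi S :|: Phi S'.
Proof.
apply/setP=> x; case: (blk_ex x) => c xc.
by rewrite inE !(inPhiE _ xc) inE.
Qed.
Lemma Phi0 : Phi set0 = set0.
Proof. by rewrite /Phi big_set0. Qed.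
Lemma PhiT : Phi setT = setT.
Proof.
apply/setP=> x; case: (blk_ex x) => c xc.
by rewrite inE !(inPhiE _ xc) inE.
Qed.

Lemma preK (S : {set qT P}) : pre (Phi S) = S.
Proof.
apply/setP=> c; rewrite inE; apply/idP/idP => [|cS].
  case/set0Pn: (blk_ne0 c) => x xc /subsetP /(_ x xc).
  by rewrite (inPhiE _ xc).
by apply/subsetP=> x xc; rewrite (inPhiE _ xc).
Qed.

Lemma Phi_inj : injective Phi.
Proof. by move=> S S' e; rewrite -(preK S) e preK. Qed.

Lemma sat_Phi (S : {set qT P}) : sat P (Phi S).
Proof.
move=> C CP; pose c : qT P := exist _ C CP.
case cS: (c \in S); [left | right]; apply/subsetP=> x xC.
  by rewrite (inPhiE (c := c)) //.
by rewrite inE (inPhiE (c := c)) // cS.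
Qed.

Lemma PhiK U : sat P U -> Phi (pre U) = U.
Proof.
move=> sU; apply/setP=> x; case: (blk_ex x) => c xc.
rewrite (inPhiE _ xc) inE; apply/idP/idP => [/subsetP/(_ x xc) //|xU].
case: (sU _ (blk_in c)) => // /subsetP/(_ x xc); by rewrite inE xU.
Qed.

Lemma sat_ex U : sat P U -> exists S : {set qT P}, U = Phi S.
Proof. by move=> sU; exists (pre U); rewrite PhiK. Qed.

Lemma Phi_sub (S S' : {set qT P}) : (Phi S \subset Phi S') = (S \subset S').
Proof.
apply/idP/idP => h.
  apply/subsetP=> c cS; case/set0Pn: (blk_ne0 c) => x xc.
  by rewrite -(inPhiE _ xc); apply: (subsetP h); rewrite (inPhiE _ xc).
apply/subsetP=> x; case: (blk_ex x) => c xc.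
by rewrite !(inPhiE _ xc); apply: (subsetP h).
Qed.

Lemma Phi_eq0 (S : {set qT P}) : (Phi S == set0) = (S == set0).
Proof. by rewrite -Phi0 (inj_eq Phi_inj). Qed.

Lemma fquot0 f : f set0 = 0 -> fquot P f set0 = 0.
Proof. by move=> f0; rewrite /fquot big_set0. Qed.

Lemma fquotE f S : fquot P f S = f (Phi S).
Proof. by []. Qed.

Lemma fquot_sep f (S : {set qT P}) : sep (fquot P f) S <-> psep f P (Phi S).
Proof.
split=> h A.
  move=> sA; case: (sat_ex sA) => A' ->.
  by rewrite -PhiD -PhiI -!fquotE h.
by rewrite !fquotE PhiD PhiI; apply: h; apply: sat_Phi.
Qed.

Lemma fquot_locsep f (S Z : {set qT P}) :
  locsep (fquot P f) S Z <-> plocsep f P (Phi S) (Phi Z).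
Proof.
split=> h A.
  move=> sA; case: (sat_ex sA) => A' -> sub.
  rewrite -PhiD -PhiI -!fquotE h //; by rewrite -Phi_sub.
move=> sub; rewrite !fquotE PhiD PhiI; apply: h; first by apply: sat_Phi.
by rewrite Phi_sub.
Qed.

Lemma fquot_indecl f (S : {set qT P}) :
  indecl (fquot P f) S <-> pindecl f P (Phi S).
Proof.
split=> [[n0 h]|[n0 h]]; split.
- by rewrite Phi_eq0.
- move=> Z sZ sub l; case: (sat_ex sZ) => Z' eZ; subst Z.
  have := h Z'; rewrite -Phi_sub => /(_ sub).
  case; first by apply/fquot_locsep.
    by move=> ->; rewrite Phi0; left.
  by move=> ->; right.
- by rewrite -Phi_eq0.
- move=> Z sub l; case: (h (Phi Z)); first exact: sat_Phi.
  + by rewrite Phi_sub.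
  + by apply/fquot_locsep.
  + by move/eqP; rewrite Phi_eq0 => /eqP; left.
  + by move/Phi_inj; right.
Qed.

End Quot.

Section ES.
Variable T : finType.
Implicit Types (f : {set T} -> int) (A B C U Y : {set T}) (P : {set {set T}}).

Lemma sep_cover_atoms f U : f set0 = 0 ->
  (forall x, x \in U -> exists Y, [/\ Y \in atoms f, x \in Y & Y \subset U]) ->
  sep f U.
Proof.
move=> f0 h.
have -> : U = \bigcup_(Y | (Y \in atoms f) && (Y \subset U)) Y.
  apply/setP=> x; apply/idP/bigcupP => [xU|[Y /andP[_ sY] xY]].
    case: (h x xU) => Y [YA xY sY]; exists Y => //; by rewrite YA sY.
  exact: (subsetP sY).
by apply: (sep_bigcup f0) => Y /andP[/atomsP[_ s _] _].
Qed.

Lemma atom_sat f P Y : partition P [set: T] -> (forall C, C \in P -> indecl f C) ->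
  Y \in atoms f -> sat P Y.
Proof.
move=> pP hi YA C CP; have [_ h] := hi C CP.
have := YA; case/atomsP => _ sY _.
case: (h (C :&: Y)); first exact: subsetIl.
- move=> A sA; rewrite (sY A).
  have -> : A :\: (C :&: Y) = A :\: Y.
    by apply/setP=> x; move: (subsetP sA x); rewrite !inE; bcase.
  have -> : A :&: (C :&: Y) = A :&: Y.
    by apply/setP=> x; move: (subsetP sA x); rewrite !inE; bcase.
  by [].
- move=> e; right; apply/subsetP=> x xC; rewrite inE; apply/negP=> xY.
  have h' : x \in C :&: Y by rewrite inE xC xY.
  by rewrite e inE in h'.
- by move=> e; left; rewrite -e subsetIr.
Qed.

Lemma ic_quot_lift f P : f set0 = 0 -> partition P [set: T] ->
  (forall C, C \in P -> indecl f C) ->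
  (ic (fquot P f) = ic f <-> qlift f P).
Proof.
move=> f0 pP hi; set g := fquot P f.
have g0 : g set0 = 0 by apply: fquot0.
have aS := atom_sat pP hi.
pose G := [set pre P Y | Y in atoms f].
have preA Y : Y \in atoms f -> Phi (pre P Y) = Y.
  by move=> YA; apply: PhiK => //; apply: aS.
have pG : partition G [set: qT P].
  apply/partP; split.
  - move=> c; case/set0Pn: (blk_ne0 pP c) => x xc.
    have [cA _ _] := (partP _).1 (atoms_part f0).
    case: (cA x) => Y YA xY; exists (pre P Y); first by apply: imset_f.
    by rewrite -(inPhiE pP _ xc) preA.
  - move=> _ _ c /imsetP[Y YA ->] /imsetP[Y' Y'A ->] cY cY'.
    have [_ dA _] := (partP _).1 (atoms_part f0).
    case/set0Pn: (blk_ne0 pP c) => x xc.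
    have xY : x \in Y by rewrite -(preA Y YA) (inPhiE pP _ xc).
    have xY' : x \in Y' by rewrite -(preA Y' Y'A) (inPhiE pP _ xc).
    by rewrite (dA _ _ x YA Y'A xY xY').
  - apply/imsetP=> [[Y YA e]]; have := YA; case/atomsP => n0 _ _.
    by move: n0; rewrite -(preA Y YA) -e Phi0 eqxx.
have cG : #|G| = #|atoms f|.
  apply: card_in_imset => Y Y' YA Y'A e.
  by rewrite -(preA Y YA) e preA.
have sG : forall S, S \in G -> sep g S.
  move=> _ /imsetP[Y YA ->]; apply/fquot_sep => //; rewrite preA //.
  by move=> A _; case/atomsP: YA => _ sY _; apply: sY.
have ref := atoms_refine g0 pG sG.
have [le h] := part_ref (atoms_part g0) pG ref.
rewrite /g (icE g0) (icE f0) -cG.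
split.
  move=> e U sU psU; have eA : atoms g = G by apply: h; rewrite e.
  have sgU : sep g (pre P U) by apply/fquot_sep => //; rewrite PhiK.
  apply: sep_cover_atoms => // x xU.
  case: (blk_ex pP x) => c xc.
  have cU : c \in pre P U by rewrite -(inPhiE pP _ xc) PhiK.
  have [ca _ _] := (partP _).1 (atoms_part g0).
  case: (ca c) => a aA ca'.
  have aG : a \in G by rewrite -eA.
  case/imsetP: aG => Y YA eY; exists Y; split => //.
    by rewrite -(preA Y YA) -eY (inPhiE pP _ xc).
  case: (atom_sub_sep g0 aA sgU) => s.
    by rewrite -(preA Y YA) -eY -(PhiK pP sU) Phi_sub.
  by move: (subsetP s c ca'); rewrite inE cU.
move=> hl; apply/eqP; rewrite eqn_leq le andbT.
apply: subset_leq_card; apply/subsetP=> a aA.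
have sa : sep f (Phi a).
  apply: hl; first exact: sat_Phi.
  by apply/(fquot_sep pP); have := aA; case/atomsP.
case: (ref a aA) => _ /imsetP[Y YA ->] saY.
have := YA; case/atomsP => _ _ m.
case: (m (Phi a)) => //.
- by rewrite -(preA Y YA) Phi_sub.
- move/eqP; rewrite Phi_eq0 // => /eqP ea; move: aA; rewrite ea.
  by case/atomsP; rewrite eqxx.
- move=> e; rewrite -(preK pP a) e; exact: imset_f.
Qed.

Lemma ESE f P : f set0 = 0 ->
  ES f P <-> [/\ partition P [set: T], (forall C, C \in P -> indecl f C) & qlift f P].
Proof.
move=> f0; split.
  case=> /(EWE _ f0) [pP hi] e; split => //.
  by apply/(ic_quot_lift f0 pP hi).
case=> pP hi hl; split; first by apply/EWE.
by apply/(ic_quot_lift f0 pP hi).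
Qed.

End ES.

Section P3.
Variable T : finType.
Implicit Types (f g : {set T} -> int) (A B C U Y : {set T}) (P : {set {set T}}).

Lemma mod_sep g : g set0 = 0 -> modular g <-> forall x, sep g [set x].
Proof.
move=> g0; split=> [m x A|h].
  rewrite !m (big_setID [set x]) /= addrC; congr (_ + _).
suff H : forall n A, #|A| = n -> g A = \sum_(x in A) g [set x] by move=> A; apply: (H _ A erefl).
elim=> [|n IH] A cA.
  by move/cards0_eq: cA => ->; rewrite big_set0.
have : A != set0 by apply/negP=> /eqP e; move: cA; rewrite e cards0.
case/set0Pn=> x xA; rewrite (big_setD1 _ xA) /= (h x A).
have -> : A :&: [set x] = [set x] by apply/setIidPr; rewrite sub1set.
rewrite addrC -IH //; by rewrite (cardsD1 x) xA in cA; case: cA.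
Qed.

End P3.

Section P3b.
Variable T : finType.
Implicit Types (f g : {set T} -> int) (A B C U Y : {set T}) (P : {set {set T}}).

Lemma eqpart_part : partition (eqpart T) [set: T].
Proof.
apply/partP; split.
- by move=> x; exists [set x]; [apply: imset_f | rewrite inE].
- move=> _ _ x /imsetP[y _ ->] /imsetP[z _ ->]; rewrite !inE => /eqP<- /eqP<-.
  by [].
- apply/imsetP=> [[x _ e]]; have : x \in [set x] by rewrite inE.
  by rewrite -e inE.
Qed.

Lemma sat_eqpart A : sat (eqpart T) A.
Proof.
move=> _ /imsetP[x _ ->]; case xA: (x \in A); [left | right];
  by rewrite sub1set ?inE xA.
Qed.

Lemma indecl1 f x : indecl f [set x].
Proof.
split; first by apply/set0Pn; exists x; rewrite inE.
move=> Z; rewrite subset1 => /orP[] /eqP -> _; by [right | left].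
Qed.

Lemma EW_atoms f P : f set0 = 0 -> EW f P -> atoms (restr_part f P) = P.
Proof.
move=> f0 ew; have [pP hi] := (EWE _ f0).1 ew.
set g := restr_part f P; have g0 : g set0 = 0 by apply: restr0.
symmetry; apply: part_sub_eq => //; first exact: atoms_part.
apply/subsetP=> C CP; apply: sep_indecl_atom => //; first exact: restr_blk_sep.
apply/(indecl_eq (g := g) (f := f)); last by apply: hi.
by move=> A sA; apply: (restr_in f0 pP CP sA).
Qed.

Lemma Phi1 P (pP : partition P [set: T]) (c : qT P) : Phi [set c] = val c.
Proof. by rewrite /Phi big_set1. Qed.

Lemma part3 f : f set0 = 0 ->
  [/\ ES f (eqpart T), ES f (icpart f) &
      forall P, ES f P ->
        (modular (restr_part f P) <-> P = eqpart T) /\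
        (modular (fquot P f) <-> P = icpart f)].
Proof.
move=> f0; split.
- apply/ESE => //; split.
  + exact: eqpart_part.
  + by move=> _ /imsetP[x _ ->]; apply: indecl1.
  + by move=> U _ ps A; apply: ps; apply: sat_eqpart.
- rewrite icpart_atoms //; apply/ESE => //; split.
  + exact: atoms_part.
  + by move=> Y YA; apply: atom_indecl.
  + move=> U sU _; apply: sep_cover_atoms => // x xU.
    exists (cls f x); split; [exact: cls_atom | exact: cls_in |].
    case: (sU _ (cls_atom f0 x)) => // /subsetP /(_ x (cls_in f x)).
    by rewrite inE xU.
move=> P es; have := es; case/(ESE _ f0) => pP hi hl; split.
  set g := restr_part f P; have g0 : g set0 = 0 by apply: restr0.
  rewrite (mod_sep g0); split.
    move=> h; rewrite -(EW_atoms f0 (proj1 es)); apply: part_sub_eq.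
    + exact: atoms_part.
    + exact: eqpart_part.
    apply/subsetP=> Y YA; have := YA; case/atomsP => /set0Pn[x xY] _ m.
    case: (m [set x]); rewrite ?sub1set // => e.
      by move: (set11 x); rewrite e inE.
    by rewrite -e; apply: imset_f.
  move=> eP x; apply: restr_blk_sep => //; rewrite eP; exact: imset_f.
set h := fquot P f; have h0 : h set0 = 0 by apply: fquot0.
rewrite (mod_sep h0) icpart_atoms //; split.
  move=> hs; apply: part_sub_eq => //; first exact: atoms_part.
  apply/subsetP=> C CP; pose c : qT P := exist _ C CP.
  have sC : sep f C.
    apply: hl; first by rewrite -[C]/(val c) -(Phi1 pP); apply: sat_Phi.
    by rewrite -[C]/(val c) -(Phi1 pP); apply/(fquot_sep pP).
  by apply: sep_indecl_atom => //; apply: hi.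
move=> eP c; apply/(fquot_sep pP); rewrite Phi1 //.
move=> A _; have : val c \in atoms f by rewrite -eP; apply: valP.
by case/atomsP=> _ s _; apply: s.
Qed.

End P3b.

Section SatGen.
Variable T : finType.
Implicit Types (f g : {set T} -> int) (A B C D U V Z Y : {set T}) (P Q : {set {set T}}).

Lemma satI P U V : sat P U -> sat P V -> sat P (U :&: V).
Proof.
move=> sU sV C CP; case: (sU C CP) => hU; case: (sV C CP) => hV.
- by left; rewrite subsetI hU hV.
- right; apply: subset_trans hV _; apply/subsetP=> x; rewrite !inE; bcase.
- right; apply: subset_trans hU _; apply/subsetP=> x; rewrite !inE; bcase.
- right; apply: subset_trans hU _; apply/subsetP=> x; rewrite !inE; bcase.
Qed.

Lemma sat_blk P D : partition P [set: T] -> D \in P -> sat P D.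
Proof.
move=> pP DP C CP; case: (eqVneq C D) => [->|ne]; first by left.
right; apply/subsetP=> x xC; rewrite inE; apply/negP=> xD.
have [_ dP _] := (partP _).1 pP.
by move/eqP: ne; apply; apply: (dP C D x).
Qed.

Lemma sat_refine P P' U : refines P P' -> sat P' U -> sat P U.
Proof.
move=> r sU C CP; case: (r C CP) => D [DP' sCD].
by case: (sU D DP') => h; [left | right]; apply: subset_trans h.
Qed.

Lemma indecl_split f C Z : indecl f C -> locsep f C Z -> C \subset Z \/ C \subset ~: Z.
Proof.
move=> [n0 h] l; case: (h (C :&: Z)); first exact: subsetIl.
- move=> A sA; rewrite (l A sA).
  have -> : A :\: (C :&: Z) = A :\: Z.
    by apply/setP=> x; move: (subsetP sA x); rewrite !inE; bcase.
  have -> : A :&: (C :&: Z) = A :&: Z.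
    by apply/setP=> x; move: (subsetP sA x); rewrite !inE; bcase.
  by [].
- move=> e; right; apply/subsetP=> x xC; rewrite inE; apply/negP=> xZ.
  have h' : x \in C :&: Z by rewrite inE xC xZ.
  by rewrite e inE in h'.
- by move=> e; left; rewrite -e subsetIr.
Qed.

Lemma sat_of_blocks P U : (forall D, D \in P -> U :&: D = set0 \/ U :&: D = D) -> sat P U.
Proof.
move=> h D DP; case: (h D DP) => e; [right | left].
  apply/subsetP=> x xD; rewrite inE; apply/negP=> xU.
  have h' : x \in U :&: D by rewrite inE xU xD.
  by rewrite e inE in h'.
by rewrite -e subsetIl.
Qed.

Lemma sat_sep_restr f P' U : f set0 = 0 -> partition P' [set: T] -> sat P' U ->
  sep (restr_part f P') U.
Proof.
move=> f0 pP' sU; have g0 := restr0 P' f0.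
have -> : U = \bigcup_(D | (D \in P') && (D \subset U)) D.
  apply/setP=> x; apply/idP/bigcupP => [xU|[D /andP[_ sD] xD]].
    have [cP _ _] := (partP _).1 pP'.
    case: (cP x) => D DP xD; exists D => //; rewrite DP /=.
    case: (sU D DP) => // /subsetP /(_ x xD); by rewrite inE xU.
  exact: (subsetP sD).
by apply: (sep_bigcup g0) => D /andP[DP _]; apply: restr_blk_sep.
Qed.

End SatGen.

Section P2.
Variable T : finType.
Variables (P P' : {set {set T}}).
Hypotheses (pP : partition P [set: T]) (pP' : partition P' [set: T]) (r : refines P P').
Implicit Types (f : {set T} -> int) (A B C D U V Z : {set T}).

Lemma satP'P D : D \in P' -> sat P D.
Proof. by move=> DP; apply: (sat_refine r); apply: sat_blk. Qed.

Lemma PhiC (S : {set qT P}) : Phi (~: S) = ~: Phi S.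
Proof. by rewrite -setTD (PhiD pP) (PhiT pP) setTD. Qed.

Lemma qpart_part : partition (qpart P P') [set: qT P].
Proof.
apply/partP; split.
- move=> c; case: (r (blk_in c)) => D [DP sD].
  by exists (pre P D); [apply: imset_f | rewrite inE].
- move=> _ _ c /imsetP[D DP ->] /imsetP[D' DP' ->]; rewrite !inE => s s'.
  case/set0Pn: (blk_ne0 pP c) => x xc.
  have [_ dP _] := (partP _).1 pP'.
  by rewrite (dP D D' x DP DP' (subsetP s x xc) (subsetP s' x xc)).
- apply/imsetP=> [[D DP e]]; have := part_ne0 pP' DP.
  have := PhiK pP (satP'P DP); rewrite /pre -e Phi0 => <-; by rewrite eqxx.
Qed.

Lemma sat_qpart (S : {set qT P}) : sat (qpart P P') S <-> sat P' (Phi S).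
Proof.
split=> h.
  move=> D DP; case: (h (pre P D)); first by apply: imset_f.
    by move=> s; left; rewrite -(PhiK pP (satP'P DP)) Phi_sub.
  by move=> s; right; rewrite -(PhiK pP (satP'P DP)) -PhiC Phi_sub.
move=> _ /imsetP[D DP ->]; case: (h D DP) => s; [left | right].
  by rewrite -(Phi_sub pP) (PhiK pP (satP'P DP)).
by rewrite -(Phi_sub pP) (PhiK pP (satP'P DP)) PhiC.
Qed.

Lemma psep_qpart f (S : {set qT P}) :
  psep (fquot P f) (qpart P P') S <-> psep f P' (Phi S).
Proof.
split=> h A sA.
  case: (sat_ex pP (sat_refine r sA)) => A' eA; subst A.
  rewrite -(PhiD pP) -(PhiI pP) -!fquotE; apply: h.
  by apply/sat_qpart.
rewrite !fquotE (PhiD pP) (PhiI pP); apply: h; by apply/sat_qpart.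
Qed.

Lemma ES_quot f : f set0 = 0 ->
  ES (fquot P f) (qpart P P') <->
  (forall D, D \in P' -> pindecl f P D) /\
  (forall U, sat P' U -> psep f P' U -> psep f P U).
Proof.
move=> f0; have g0 := fquot0 P f0.
rewrite (ESE _ g0); split.
  case=> _ hi hl; split.
    move=> D DP; rewrite -(PhiK pP (satP'P DP)); apply/(fquot_indecl pP).
    by apply: hi; apply: imset_f.
  move=> U sU ps; case: (sat_ex pP (sat_refine r sU)) => S eS; subst U.
  apply/(fquot_sep pP); apply: hl; first by apply/sat_qpart.
  by apply/psep_qpart.
case=> hi hl; split.
- exact: qpart_part.
- move=> _ /imsetP[D DP ->]; apply/(fquot_indecl pP).
  by rewrite -/(pre P D) (PhiK pP (satP'P DP)); apply: hi.
- move=> S sS ps; apply/(fquot_sep pP); apply: hl.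
    by apply/sat_qpart.
  by apply/psep_qpart.
Qed.

Lemma inP' C : C \in P -> exists2 D, D \in P' & C \subset D.
Proof. by move=> CP; case: (r CP) => D [DP sD]; exists D. Qed.

Lemma ES_restr f : f set0 = 0 ->
  ES (restr_part f P') P <->
  (forall C, C \in P -> indecl f C) /\ qlift (restr_part f P') P.
Proof.
move=> f0; have g0 := restr0 P' f0.
rewrite (ESE _ g0); split.
  case=> _ hi hl; split => // C CP; case: (inP' CP) => D DP sCD.
  apply/(indecl_eq (g := restr_part f P') (f := f)); last by apply: hi.
  by move=> A sA; apply: (restr_in f0 pP' DP); apply: subset_trans sCD.
case=> hi hl; split => // C CP; case: (inP' CP) => D DP sCD.
apply/(indecl_eq (g := restr_part f P') (f := f)); last by apply: hi.
by move=> A sA; apply: (restr_in f0 pP' DP); apply: subset_trans sCD.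
Qed.

Lemma part2 f : f set0 = 0 ->
  ((ES f P /\ ES (fquot P f) (qpart P P')) <->
   (ES f P' /\ ES (restr_part f P') P)).
Proof.
move=> f0; rewrite !(ESE _ f0) (ES_quot f0) (ES_restr f0).
have g0 := restr0 P' f0.
have r3 : forall U D, psep (restr_part f P') P U -> D \in P' ->
    plocsep f P D (U :&: D).
  move=> U D ps DP A sA sAD.
  have e : forall B, B \subset D -> restr_part f P' B = f B.
    by move=> B sB; apply: (restr_in f0 pP' DP).
  rewrite -(e A sAD) ps // e ?e //.
  - congr (_ + _); congr f; apply/setP=> x; move: (subsetP sAD x); rewrite !inE; bcase.
  - by apply: subset_trans sAD; apply: subsetIl.
  - by apply: subset_trans sAD; apply: subsetDl.
have r4 : forall V D, D \in P' -> V \subset D -> plocsep f P D V ->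
    psep (restr_part f P') P V.
  move=> V D DP sVD pl A sA; apply: (restr_split f0 pP' DP sVD).
  apply: pl; first by apply: satI => //; apply: satP'P.
  exact: subsetIr.
have r5 : forall V D, D \in P' -> sep (restr_part f P') V -> locsep f D V.
  move=> V D DP s; apply/(locsep_eq (g := restr_part f P')); last by move=> A _; apply: s.
  by move=> A sA; apply: (restr_in f0 pP' DP).
have blocks : forall U, (forall D, D \in P' -> plocsep f P D (U :&: D) ->
      U :&: D = set0 \/ U :&: D = D) ->
    (forall D, D \in P' -> plocsep f P D (U :&: D)) -> sat P' U.
  by move=> U h1 h2; apply: sat_of_blocks => D DP; apply: h1 => //; apply: h2.
split.
  case=> [[_ hiP lP] [pind lq]]; split; split => //.
  - move=> D DP; have [n0 h] := pind D DP; split => // Z sZ l.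
    apply: h => //; last by move=> A _ sA; apply: l.
    move=> C CP; have [sD|sD] := satP'P DP CP.
      apply: (indecl_split (hiP C CP)); exact: locsepS l.
    right; apply: subset_trans sD _; apply/subsetP=> x; rewrite !inE.
    by apply: contra; apply: (subsetP sZ).
  - move=> U sU ps; apply: lP; first by apply: sat_refine sU.
    by apply: lq.
  - move=> U sU ps; apply: sat_sep_restr => //.
    apply: sat_of_blocks => D DP; have [_ h] := pind D DP.
    apply: h; [by apply: satI => //; apply: satP'P | exact: subsetIr | by apply: r3].
case=> [[_ hiP' lP'] [hiP lR]].
have pind : forall D, D \in P' -> pindecl f P D.
  move=> D DP; split; first exact: part_ne0 pP' DP.
  move=> V sV sVD pl; have [_ h] := hiP' D DP; apply: h => //.
  apply: (r5 V D DP); apply: lR => //; exact: (r4 V D).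
split; split => //.
- move=> U sU ps; apply: lP' => //.
  + apply: sat_of_blocks => D DP; have [_ h] := pind D DP.
    apply: h; [by apply: satI => //; apply: satP'P | exact: subsetIr |].
    move=> A sA sAD; rewrite (ps A sA); congr (_ + _); congr f;
      apply/setP=> x; move: (subsetP sAD x); rewrite !inE; bcase.
  + by move=> A sA; apply: ps; apply: sat_refine sA.
- move=> U sU ps A sA; exact: (lP' U sU ps).
Qed.

End P2.

Section Side.
Variables (W X : finType) (e : X -> W).
Hypothesis einj : injective e.
Variables (f : {set X} -> int) (k h : {set W} -> int).
Definition Eset := e @: [set: X].
Hypotheses (f0 : f set0 = 0) (k0 : k set0 = 0)
  (kE : forall A, k A = k (A :\: Eset))
  (hE : forall A, h A = f (e @^-1: A) + k A).

Lemma preL (B : {set X}) : e @^-1: (e @: B) = B.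
Proof. by apply/setP=> x; rewrite inE (mem_imset _ _ einj). Qed.

Lemma imgK (A : {set W}) : A \subset Eset -> e @: (e @^-1: A) = A.
Proof.
move=> sA; apply/setP=> w; apply/imsetP/idP => [[x]|wA].
  by rewrite inE => xA ->.
have := subsetP sA w wA; case/imsetP => x _ ew; exists x => //.
by rewrite inE -ew.
Qed.

Lemma img_sub (B : {set X}) : e @: B \subset Eset.
Proof. by apply: imsetS; apply: subsetT. Qed.

Lemma kin (A : {set W}) : A \subset Eset -> k A = 0.
Proof.
move=> sA; rewrite kE -k0; congr k; apply/setP=> w; rewrite !inE.
by move: (subsetP sA w); bcase.
Qed.

Lemma hE' (A : {set W}) : A \subset Eset -> h A = f (e @^-1: A).
Proof. by move=> sA; rewrite hE kin // addr0. Qed.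

Lemma subE_D (A U : {set W}) : A \subset Eset -> A :\: U \subset Eset.
Proof. by move=> sA; apply: subset_trans sA; apply: subsetDl. Qed.
Lemma subE_I (A U : {set W}) : A \subset Eset -> A :&: U \subset Eset.
Proof. by move=> sA; apply: subset_trans sA; apply: subsetIl. Qed.

Lemma sepE : sep h Eset.
Proof.
move=> A; rewrite !hE preimsetD preimsetI.
have -> : e @^-1: Eset = setT by apply/setP=> x; rewrite !inE imset_f.
rewrite setDT setIT f0 add0r (kin (subsetIr _ _)) addr0 addrC.
by congr (_ + _); rewrite kE [in RHS]kE; congr k; apply/setP=> w; rewrite !inE; bcase.
Qed.

Lemma locsep_img (B Z : {set X}) : locsep h (e @: B) (e @: Z) <-> locsep f B Z.
Proof.
split=> l A sA.
  have sA' : e @: A \subset e @: B by apply: imsetS.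
  have := l _ sA'; rewrite !hE' ?subE_D ?subE_I ?img_sub //.
  by rewrite preimsetD preimsetI !preL.
have sE : A \subset Eset by apply: subset_trans sA (img_sub _).
rewrite !hE' ?subE_D ?subE_I // preimsetD preimsetI preL; apply: l.
by rewrite -(preL B); apply: preimsetS.
Qed.

Lemma indecl_img (B : {set X}) : indecl h (e @: B) <-> indecl f B.
Proof.
split=> [[n0 m]|[n0 m]]; split.
- by rewrite -(imset_eq0 e).
- move=> Z sZ l; case: (m (e @: Z)); first by apply: imsetS.
  + by apply/locsep_img.
  + by move/eqP; rewrite imset_eq0 => /eqP; left.
  + by move/(imset_inj einj); right.
- by rewrite imset_eq0.
- move=> Z sZ l; have sE : Z \subset Eset by apply: subset_trans sZ (img_sub _).
  have eZ := imgK sE; rewrite -eZ in l sZ *.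
  case: (m (e @^-1: Z)).
  + by have := preimsetS e sZ; rewrite !preL.
  + by apply/locsep_img.
  + by move=> ->; rewrite imset0; left.
  + by move=> ->; right.
Qed.

Lemma sep_img (B : {set X}) : sep h (e @: B) -> sep f B.
Proof.
move=> s A; have := s (e @: A); rewrite !hE' ?subE_D ?subE_I ?img_sub //.
by rewrite preimsetD preimsetI !preL.
Qed.

Variables (PX : {set {set X}}) (P : {set {set W}}).
Hypotheses (hP1 : forall C, C \in PX -> e @: C \in P)
  (hP2 : forall D, D \in P -> (exists2 C, C \in PX & D = e @: C) \/ D \subset ~: Eset).

Lemma sat_img (B : {set X}) : sat PX B -> sat P (e @: B).
Proof.
move=> sB D DP; case: (hP2 DP) => [[C CP ->]|sD].
  case: (sB C CP) => s; [left; exact: imsetS|right].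
  apply/subsetP=> _ /imsetP[x xC ->]; rewrite inE (mem_imset _ _ einj).
  by move: (subsetP s x xC); rewrite inE.
right; apply: subset_trans sD _; rewrite setCS; exact: img_sub.
Qed.

Lemma sat_pre (A : {set W}) : sat P A -> sat PX (e @^-1: A).
Proof.
move=> sA C CP; case: (sA _ (hP1 CP)) => s; [left|right].
  by rewrite -(preL C); apply: preimsetS.
by rewrite -preimsetC -(preL C); apply: preimsetS.
Qed.

Lemma psep_img (B : {set X}) : psep f PX B -> psep h P (e @: B).
Proof.
move=> ps A sA; rewrite !hE preimsetD preimsetI preL.
rewrite (ps _ (sat_pre sA)) (kin (subset_trans (subsetIr A (e @: B)) (img_sub B))) addr0 addrAC.
congr (_ + _); congr (_ + _); rewrite kE [in RHS]kE; congr k; apply/setP=> w; rewrite !inE.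
by move: (subsetP (img_sub B) w); bcase.
Qed.

Lemma psep_pre (U : {set W}) : psep h P U -> psep f PX (e @^-1: U).
Proof.
move=> ps B sB; have := ps _ (sat_img sB).
rewrite !hE' ?subE_D ?subE_I ?img_sub //.
by rewrite preimsetD preimsetI !preL.
Qed.

End Side.

Section Side2.
Variables (W X : finType) (e : X -> W).
Hypothesis einj : injective e.
Variables (f : {set X} -> int) (k h : {set W} -> int).
Hypotheses (f0 : f set0 = 0) (k0 : k set0 = 0)
  (kE : forall A, k A = k (A :\: Eset e))
  (hE : forall A, h A = f (e @^-1: A) + k A).

Lemma side_ES (P : {set {set W}}) : partition P [set: W] ->
  (forall D, D \in P -> indecl h D) -> qlift h P ->
  (forall D, D \in P -> D \subset Eset e \/ D \subset ~: Eset e) ->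
  ES f [set C : {set X} | e @: C \in P].
Proof.
move=> pP hi hl sd; set PX := [set C : {set X} | e @: C \in P].
have hP1 : forall C, C \in PX -> e @: C \in P by move=> C; rewrite inE.
have hP2 : forall D, D \in P -> (exists2 C, C \in PX & D = e @: C) \/ D \subset ~: Eset e.
  move=> D DP; case: (sd D DP) => s; [left|by right].
  by exists (e @^-1: D); rewrite ?inE imgK.
have [cP dP nP] := (partP _).1 pP.
apply/ESE => //; split.
- apply/partP; split.
  + move=> x; case: (cP (e x)) => D DP xD; case: (hP2 D DP) => [[C CX eD]|s].
      by exists C => //; move: xD; rewrite eD (mem_imset _ _ einj).
    by move: (subsetP s _ xD); rewrite inE imset_f.
  + move=> C C' x CX C'X xC xC'; apply: (imset_inj einj).
    apply: (dP _ _ (e x)); by rewrite ?hP1 ?(mem_imset _ _ einj).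
  + by rewrite inE imset0.
- by move=> C CX; apply/(indecl_img einj k0 kE hE); apply: hi; apply: hP1.
- move=> U sU ps; apply: (sep_img einj k0 kE hE); apply: hl.
    exact: (sat_img einj hP2).
  exact: (psep_img einj k0 kE hE hP1).
Qed.

Lemma side_back (PX : {set {set X}}) (P : {set {set W}}) :
  ES f PX -> (forall C, C \in PX -> e @: C \in P) ->
  (forall D, D \in P -> (exists2 C, C \in PX & D = e @: C) \/ D \subset ~: Eset e) ->
  (forall C, C \in PX -> indecl h (e @: C)) /\
  (forall U, sat P U -> psep h P U -> sep f (e @^-1: U)).
Proof.
move=> /(ESE _ f0) [pX hiX hlX] hP1 hP2; split.
  by move=> C CX; apply/(indecl_img einj k0 kE hE); apply: hiX.
move=> U sU ps; apply: hlX; first exact: (sat_pre einj hP1).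
exact: (psep_pre einj k0 kE hE hP2).
Qed.

End Side2.

Section Star.
Variables (X Y : finType) (f : {set X} -> int) (g : {set Y} -> int).
Hypotheses (f0 : f set0 = 0) (g0 : g set0 = 0).
Let h := star1 f g.
Let kL (A : {set (X + Y)%type}) := g (inr @^-1: A).
Let kR (A : {set (X + Y)%type}) := f (inl @^-1: A).

Lemma inl_inj' : injective (@inl X Y). Proof. by move=> a b []. Qed.
Lemma inr_inj' : injective (@inr X Y). Proof. by move=> a b []. Qed.

Lemma inEL (x : X) : (inl x \in Eset (@inl X Y)) = true.
Proof. exact: imset_f. Qed.
Lemma inEL' (y : Y) : (inr y \in Eset (@inl X Y)) = false.
Proof. by apply/negbTE/imsetP=> [[x _]]. Qed.
Lemma inER (y : Y) : (inr y \in Eset (@inr X Y)) = true.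
Proof. exact: imset_f. Qed.
Lemma inER' (x : X) : (inl x \in Eset (@inr X Y)) = false.
Proof. by apply/negbTE/imsetP=> [[y _]]. Qed.

Lemma kL0 : kL set0 = 0. Proof. by rewrite /kL preimset0. Qed.
Lemma kR0 : kR set0 = 0. Proof. by rewrite /kR preimset0. Qed.
Lemma kLE A : kL A = kL (A :\: Eset inl).
Proof. by rewrite /kL; congr g; apply/setP=> y; rewrite !inE inEL'. Qed.
Lemma kRE A : kR A = kR (A :\: Eset inr).
Proof. by rewrite /kR; congr f; apply/setP=> y; rewrite !inE inER'. Qed.
Lemma hL A : h A = f (inl @^-1: A) + kL A. Proof. by []. Qed.
Lemma hR A : h A = g (inr @^-1: A) + kR A. Proof. by rewrite /h /star1 addrC. Qed.

Lemma h0 : h set0 = 0. Proof. by rewrite hL kL0 preimset0 f0 addr0. Qed.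

Lemma sideLR (D : {set (X + Y)%type}) : D \subset ~: Eset inl -> D \subset Eset inr.
Proof.
move/subsetP=> s; apply/subsetP=> [[x|y]] xD; last by rewrite inER.
by move: (s _ xD); rewrite inE inEL.
Qed.

Lemma part1 P : ES h P <->
  exists PX PY, [/\ ES f PX, ES g PY & P = dunion PX PY].
Proof.
split.
  move=> es; have := es; case/(ESE _ h0) => pP hi hl.
  have sd : forall D, D \in P -> D \subset Eset inl \/ D \subset ~: Eset inl.
    move=> D DP; apply: (indecl_split (hi D DP)); apply: sep_loc.
    exact: (sepE f0 kL0 kLE hL).
  have sdR : forall D, D \in P -> D \subset Eset inr \/ D \subset ~: Eset inr.
    move=> D DP; case: (sd D DP) => s; [right|left; exact: sideLR].
    apply: subset_trans s _; apply/subsetP=> [[x|y]]; by rewrite !inE ?inEL ?inER ?inEL' ?inER'.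
  exists [set C : {set X} | inl @: C \in P], [set C : {set Y} | inr @: C \in P]; split.
  - exact: (side_ES inl_inj' f0 kL0 kLE hL pP hi hl sd).
  - exact: (side_ES inr_inj' g0 kR0 kRE hR pP hi hl sdR).
  - apply/setP=> D; rewrite !inE; apply/idP/idP => [DP|].
      case: (sd D DP) => s.
        by apply/orP; left; apply/imsetP; exists (inl @^-1: D); rewrite ?inE imgK.
      by apply/orP; right; apply/imsetP; exists (inr @^-1: D); rewrite ?inE imgK //; apply: sideLR.
    by case/orP => /imsetP[C]; rewrite inE => CP ->.
case=> PX [PY [eX eY eP]].
have hP1L : forall C, C \in PX -> inl @: C \in P.
  by move=> C CX; rewrite eP !inE; apply/orP; left; apply: imset_f.
have hP1R : forall C, C \in PY -> inr @: C \in P.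
  by move=> C CY; rewrite eP !inE; apply/orP; right; apply: imset_f.
have hP2L : forall D, D \in P -> (exists2 C, C \in PX & D = inl @: C) \/ D \subset ~: Eset inl.
  move=> D; rewrite eP !inE => /orP[] /imsetP[C CP ->]; first by left; exists C.
  by right; apply/subsetP=> _ /imsetP[y _ ->]; rewrite inE inEL'.
have hP2R : forall D, D \in P -> (exists2 C, C \in PY & D = inr @: C) \/ D \subset ~: Eset inr.
  move=> D; rewrite eP !inE => /orP[] /imsetP[C CP ->]; last by left; exists C.
  by right; apply/subsetP=> _ /imsetP[x _ ->]; rewrite inE inER'.
have [iL sL] := side_back inl_inj' f0 kL0 kLE hL eX hP1L hP2L.
have [iR sR] := side_back inr_inj' g0 kR0 kRE hR eY hP1R hP2R.
have [pX _ _] := (ESE _ f0).1 eX; have [pY _ _] := (ESE _ g0).1 eY.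
have [cX dX nX] := (partP _).1 pX; have [cY dY nY] := (partP _).1 pY.
apply/(ESE _ h0); split.
- apply/partP; split.
  + move=> [x|y].
      by case: (cX x) => C CX xC; exists (inl @: C); [apply: hP1L | apply: imset_f].
    by case: (cY y) => C CY yC; exists (inr @: C); [apply: hP1R | apply: imset_f].
  + move=> D D' w DP D'P wD wD'.
    case: (hP2L D DP) => [[C CX eD]|sD]; case: (hP2L D' D'P) => [[C' CX' eD']|sD'].
    * subst; case/imsetP: wD => x xC ew; subst w.
      rewrite (mem_imset _ _ inl_inj') in wD'.
      by rewrite (dX C C' x).
    * subst; case/imsetP: wD => x xC ew; subst w.
      by move: (subsetP sD' _ wD'); rewrite inE inEL.
    * subst; case/imsetP: wD' => x xC ew; subst w.
      by move: (subsetP sD _ wD); rewrite inE inEL.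
    * case: (hP2R D DP) => [[C CY eD]|sD2]; last first.
        by move: (subsetP sD2 _ wD) (subsetP sD _ wD); case: w {wD wD'} => ?; rewrite !inE ?inEL ?inER ?inEL' ?inER'.
      case: (hP2R D' D'P) => [[C' CY' eD']|sD2']; last first.
        by move: (subsetP sD2' _ wD') (subsetP sD' _ wD'); case: w {wD wD'} => ?; rewrite !inE ?inEL ?inER ?inEL' ?inER'.
      subst; case/imsetP: wD => y yC ew; subst w.
      rewrite (mem_imset _ _ inr_inj') in wD'.
      by rewrite (dY C C' y).
  + rewrite eP !inE; apply/negP => /orP[] /imsetP[C CP] /esym /eqP; rewrite imset_eq0 => /eqP e0.
      by move: nX; rewrite -e0 CP.
    by move: nY; rewrite -e0 CP.
- move=> D; rewrite eP !inE => /orP[] /imsetP[C CP ->]; [exact: iL | exact: iR].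
- move=> U sU ps A; have s1 := sL U sU ps; have s2 := sR U sU ps.
  rewrite !hL /kL !preimsetD !preimsetI (s1 (inl @^-1: A)) (s2 (inr @^-1: A)).
  by rewrite addrACA.
Qed.

End Star.

Section Fc.
Variable T : finType.
Implicit Types (A S Z U : {set T}).
Definition fc A : int := if (1 < #|A|)%N then 1 else 0.
Lemma fc0 : fc set0 = 0. Proof. by rewrite /fc cards0. Qed.
Lemma fc_small A : (#|A| <= 1)%N -> fc A = 0.
Proof. by rewrite /fc ltnNge => ->. Qed.
Lemma fc_big A : (1 < #|A|)%N -> fc A = 1.
Proof. by rewrite /fc => ->. Qed.

Lemma indecl_fc S : S != set0 -> indecl fc S.
Proof.
move=> n0; split => // Z sZ l.
case: (eqVneq Z set0) => [->|nZ]; first by left.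
case: (eqVneq Z S) => [->|nZS]; first by right.
exfalso; case/set0Pn: nZ => b bZ.
have : Z \proper S by rewrite properEneq nZS sZ.
case/properP => _ [b' b'S b'Z].
have nb : b != b' by apply: contraNneq b'Z => <-.
have sA : [set b; b'] \subset S.
  by apply/subsetP=> x; rewrite !inE => /orP[] /eqP ->; [exact: (subsetP sZ) | exact: b'S].
have := l _ sA.
have -> : [set b; b'] :\: Z = [set b'].
  apply/setP=> x; rewrite !inE; case: (eqVneq x b) => [->|_]; first by rewrite bZ ?(negbTE nb).
  by case: (eqVneq x b') => [->|_] /=; rewrite ?b'Z ?(negbTE b'Z) ?andbT ?andbF.
have -> : [set b; b'] :&: Z = [set b].
  apply/setP=> x; rewrite !inE; case: (eqVneq x b) => [->|_]; first by rewrite bZ ?(negbTE nb).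
  by case: (eqVneq x b') => [->|_] /=; rewrite ?b'Z ?(negbTE b'Z) ?andbT ?andbF.
by rewrite fc_big ?cards2 ?nb // !fc_small ?cards1.
Qed.

Lemma indecl_card1 (g : {set T} -> int) S : #|S| = 1%N -> indecl g S.
Proof. by move=> h; have [x ->] := cards1P (introT eqP h); apply: indecl1. Qed.

Lemma part_setT : [set: T] != set0 -> partition [set [set: T]] [set: T].
Proof.
move=> n0; apply/partP; split.
- by move=> x; exists [set: T]; rewrite !inE.
- by move=> C D x; rewrite !inE => /eqP -> /eqP ->.
- by rewrite inE eq_sym.
Qed.

Lemma ES_setT (g : {set T} -> int) : g set0 = 0 -> indecl g [set: T] ->
  ES g [set [set: T]].
Proof.
move=> g0 hi; apply/ESE => //; split.
- by apply: part_setT; case: hi.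
- by move=> C; rewrite inE => /eqP ->.
- move=> U sU _; case: (sU [set: T]); rewrite ?inE // => s.
    have -> : U = [set: T] by apply/eqP; rewrite eqEsubset subsetT.
    exact: sepT.
  have -> : U = set0.
    apply/setP=> x; rewrite inE; apply/negP=> xU.
    by move: (subsetP s x (in_setT x)); rewrite inE xU.
  exact: sep0.
Qed.

End Fc.
Arguments fc {T} A.

Lemma dunion_part (X Y : finType) (PX : {set {set X}}) (PY : {set {set Y}}) :
  partition PX [set: X] -> partition PY [set: Y] ->
  partition (dunion PX PY) [set: (X + Y)%type].
Proof.
move=> pX pY; have [cX dX nX] := (partP _).1 pX; have [cY dY nY] := (partP _).1 pY.
apply/partP; split.
- move=> [x|y].
    case: (cX x) => C CX xC; exists (inl @: C); last by apply: imset_f.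
    by rewrite !inE; apply/orP; left; apply: imset_f.
  case: (cY y) => C CY yC; exists (inr @: C); last by apply: imset_f.
  by rewrite !inE; apply/orP; right; apply: imset_f.
- move=> D D' w; rewrite !inE => /orP[] /imsetP[C CP ->] /orP[] /imsetP[C' CP' ->]
    /imsetP[u uC ->]; rewrite ?(mem_imset _ _ (@inl_inj' X Y)) ?(mem_imset _ _ (@inr_inj' X Y)).
  + by move=> uC'; rewrite (dX C C' u).
  + by case/imsetP.
  + by case/imsetP.
  + by move=> uC'; rewrite (dY C C' u).
- rewrite !inE; apply/negP => /orP[] /imsetP[C CP] /esym /eqP; rewrite imset_eq0 => /eqP e0.
    by move: nX; rewrite -e0 CP.
  by move: nY; rewrite -e0 CP.
Qed.

Lemma fc_img (X Y : finType) (B : {set X}) : fc (inl @: B : {set (X + Y)%type}) = fc B.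
Proof. by rewrite /fc card_imset //; apply: inl_inj'. Qed.
Lemma fc_imgR (X Y : finType) (B : {set Y}) : fc (inr @: B : {set (X + Y)%type}) = fc B.
Proof. by rewrite /fc card_imset //; apply: inr_inj'. Qed.

Lemma ex1 : exists (X Y : finType) (f : {set (X + Y)%type} -> int)
          (PX : {set {set X}}) (PY : {set {set Y}}),
     [/\ boolf f, ES (restrL f) PX, ES (restrR f) PY & ~ ES f (dunion PX PY)].
Proof.
exists (bool : finType), (unit : finType), (@fc _), [set setT], [set setT]; split.
- exact: fc0.
- apply: ES_setT; first by rewrite /restrL imset0 fc0.
  apply/(indecl_eq (f := @fc _)); first by move=> A _; rewrite /restrL fc_img.
  by apply: indecl_fc; apply/set0Pn; exists true.
- apply: ES_setT; first by rewrite /restrR imset0 fc0.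
  apply/(indecl_eq (f := @fc _)); first by move=> A _; rewrite /restrR fc_imgR.
  by apply: indecl_fc; apply/set0Pn; exists tt.
set L := Eset (@inl bool unit).
move=> /(ESE _ (fc0 _)) [_ _ hl].
have memP : forall D, D \in dunion [set [set: bool]] [set [set: unit]] ->
    D = inl @: setT \/ D = inr @: setT.
  move=> D; rewrite !inE => /orP[] /imsetP[C]; rewrite inE => /eqP -> ->; by [left|right].
have cL : #|L| = 2%N by rewrite card_imset ?cardsT ?card_bool //; apply: inl_inj'.
have cLc : #|~: L| = 1%N by rewrite cardsCs setCK cL card_sum card_bool card_unit.
have sL : sat (dunion [set [set: bool]] [set [set: unit]]) L.
  move=> D /memP [->|->]; first by left.
  by right; apply/subsetP=> _ /imsetP[y _ ->]; rewrite inE inEL'.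
have ps : psep fc (dunion [set [set: bool]] [set [set: unit]]) L.
  move=> A sA; have LD : L \in dunion [set [set: bool]] [set [set: unit]].
    by rewrite !inE; apply/orP; left; apply: imset_f; rewrite inE.
  have sm : (#|A :\: L| <= 1)%N.
    by rewrite -cLc; apply: subset_leq_card; apply/subsetP=> w; rewrite !inE => /andP[].
  case: (sA L LD) => s.
    rewrite (fc_small sm) add0r (setIidPr s) (fc_big (A := L)) ?cL //.
    by apply: fc_big; rewrite -cL (leq_trans _ (subset_leq_card s)) ?cL.
  have -> : A :&: L = set0.
    apply/setP=> w; rewrite !inE; apply/negP => /andP[wA wL].
    by move: (subsetP s w wL); rewrite inE wA.
  have -> : A :\: L = A.
    apply/setP=> w; rewrite !inE; apply/andb_idl => wA; apply/negP => wL.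
    by move: (subsetP s w wL); rewrite inE wA.
  by rewrite fc0 addr0.
have := hl L sL ps [set inl true; inr tt].
have -> : [set inl true; inr tt] :\: L = [set inr tt].
  by apply/setP=> w; rewrite !inE; case: w => [b|[]]; rewrite ?inEL ?inEL' //= ?andbF ?andbT ?orbF.
have -> : [set inl true; inr tt] :&: L = [set inl true].
  by apply/setP=> w; rewrite !inE; case: w => [b|[]]; rewrite ?inEL ?inEL' //= ?andbF ?andbT ?orbF.
rewrite fc_big ?cards2 // !fc_small ?cards1 //.
Qed.

Section Ex2.
Local Notation X := (option bool).
Local Notation Y := unit.
Local Notation W := (option bool + unit)%type.
Local Notation L := (Eset (@inl (option bool) unit)).
Definition fd (A : {set W}) : int := fc (A :&: L) + (if A == setT then 1 else 0).
Local Notation al := ([set None] : {set option bool}).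
Local Notation be := ([set Some true; Some false] : {set option bool}).
Local Notation PX := ([set al; be] : {set {set option bool}}).
Local Notation PY := ([set setT] : {set {set unit}}).

Lemma cL : #|L| = 3%N.
Proof. by rewrite card_imset ?cardsT ?card_option ?card_bool //; apply: inl_inj'. Qed.

Lemma fd0 : fd set0 = 0.
Proof.
rewrite /fd set0I fc0 add0r; case: ifP => // /eqP /setP /(_ (inr tt)).
by rewrite !inE.
Qed.

Lemma rL (B : {set X}) : restrL fd B = fc B.
Proof.
rewrite /restrL /fd (setIidPl (img_sub _ _)) fc_img.
case: ifP; rewrite ?addr0 // => /eqP /setP /(_ (inr tt)).
by rewrite !inE; case/imsetP.
Qed.

Lemma r0 : restrL fd set0 = 0. Proof. by rewrite rL fc0. Qed.

Lemma pX : partition PX [set: X].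
Proof.
apply/partP; split.
- move=> [b|]; last by exists al; rewrite !inE ?eqxx.
  exists be; first by rewrite !inE eqxx orbT.
  by rewrite !inE; case: b.
- move=> C D x; rewrite !inE => /orP[] /eqP -> /orP[] /eqP -> //;
    rewrite !inE; case: x => [[]|] //.
- rewrite !inE; apply/negP => /orP[] /eqP /setP.
    by move/(_ None); rewrite !inE.
  by move/(_ (Some true)); rewrite !inE.
Qed.

Lemma cbe : #|be| = 2%N. Proof. by rewrite cards2. Qed.
Lemma cbec : #|~: be| = 1%N.
Proof. by rewrite cardsCs setCK cbe card_option card_bool. Qed.

Lemma notES2 : ~ ES (restrL fd) PX.
Proof.
move=> /(ESE _ r0) [_ _ hl].
have bP : be \in PX by rewrite !inE eqxx orbT.
have sb : sat PX be by apply: sat_blk pX bP.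
have ps : psep (restrL fd) PX be.
  move=> A sA; rewrite !rL.
  have sm : (#|A :\: be| <= 1)%N.
    by rewrite -cbec; apply: subset_leq_card; apply/subsetP=> w; rewrite !inE => /andP[].
  case: (sA be bP) => s.
    rewrite (fc_small sm) add0r (setIidPr s) (fc_big (A := be)) ?cbe //.
    by apply: fc_big; rewrite -cbe (leq_trans _ (subset_leq_card s)) ?cbe.
  have -> : A :&: be = set0.
    apply/setP=> w; rewrite in_setI in_set0; apply/negP => /andP[wA wL].
    by move: (subsetP s w wL); rewrite inE wA.
  have -> : A :\: be = A.
    apply/setP=> w; rewrite in_setD; apply/andb_idl => wA; apply/negP => wL.
    by move: (subsetP s w wL); rewrite inE wA.
  by rewrite fc0 addr0.
have := hl be sb ps [set None; Some true]; rewrite !rL.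
have -> : [set None; Some true] :\: be = [set None].
  by apply/setP=> w; rewrite !inE; case: w => [[]|].
have -> : [set None; Some true] :&: be = [set Some true].
  by apply/setP=> w; rewrite !inE; case: w => [[]|].
by rewrite fc_big ?cards2 // !fc_small ?cards1.
Qed.

Lemma ES2 : ES fd (dunion PX PY).
Proof.
apply/(ESE _ fd0); split.
- apply: dunion_part; first exact: pX.
  by apply: part_setT; apply/set0Pn; exists tt.
- move=> D; rewrite !inE => /orP[] /imsetP[C CP ->].
    move: CP; rewrite !inE => /orP[] /eqP ->.
      by apply: indecl_card1; rewrite card_imset ?cards1 //; apply: inl_inj'.
    apply/(indecl_eq (f := fc)).
      move=> A sA; rewrite /fd (setIidPl (subset_trans sA (img_sub _ _))).
      case: ifP; rewrite ?addr0 // => /eqP eA; rewrite eA in sA.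
      by move: (subsetP sA (inr tt) (in_setT _)); case/imsetP.
    by apply: indecl_fc; apply/set0Pn; exists (inl (Some true)); apply: imset_f; rewrite !inE.
  move: CP; rewrite inE => /eqP ->.
  by apply: indecl_card1; rewrite card_imset ?cardsT ?card_unit //; apply: inr_inj'.
- move=> U sU ps.
  case: (eqVneq U set0) => [->|nU0]; first exact: sep0 fd0.
  case: (eqVneq U setT) => [->|nUT]; first exact: sepT fd0.
  have := ps setT (fun C _ => or_introl (subsetT C)).
  rewrite setTD setTI /fd eqxx setTI (fc_big (A := L)) ?cL //.
  have -> : (~: U == setT) = false.
    apply/negbTE; apply: contraNneq nU0 => e; apply/eqP.
    by rewrite -(setCK U) e setCT.
  rewrite (negbTE nUT) !addr0.
  have c3 : (#|L :&: U| + #|L :\: U|)%N = 3%N by rewrite cardsID cL.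
  rewrite setIC [U :&: L]setIC -setDE /fc => e; exfalso; move: e.
  by case: (ltnP 1 #|L :\: U|) => h1; case: (ltnP 1 #|L :&: U|) => h2; lia.
Qed.

End Ex2.

Lemma ex2 : exists (X Y : finType) (f : {set (X + Y)%type} -> int)
          (PX : {set {set X}}) (PY : {set {set Y}}),
     [/\ boolf f, partition PX [set: X], partition PY [set: Y],
         ES f (dunion PX PY) & ~ ES (restrL f) PX].
Proof.
exists (option bool : finType), (unit : finType), fd,
  [set [set None]; [set Some true; Some false]], [set setT]; split.
- exact: fd0.
- exact: pX.
- by apply: part_setT; apply/set0Pn; exists tt.
- exact: ES2.
- exact: notES2.
Qed.

Theorem theorem3p17 :
  (* (1) *)
  (forall (X Y : finType) (f : {set X} -> int) (g : {set Y} -> int),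
     boolf f -> boolf g ->
     forall P : {set {set (X + Y)%type}},
       ES (star1 f g) P <->
       exists (PX : {set {set X}}) (PY : {set {set Y}}),
         [/\ ES f PX, ES g PY & P = dunion PX PY]) /\
  (* (2) *)
  (forall (X : finType) (f : {set X} -> int) (P P' : {set {set X}}),
     boolf f -> partition P [set: X] -> partition P' [set: X] -> refines P P' ->
     ((ES f P /\ ES (fquot P f) (qpart P P')) <->
      (ES f P' /\ ES (restr_part f P') P))) /\
  (* (3) *)
  (forall (X : finType) (f : {set X} -> int), boolf f ->
     [/\ ES f (eqpart X), ES f (icpart f) &
         forall P : {set {set X}}, ES f P ->
           (modular (restr_part f P) <-> P = eqpart X) /\
           (modular (fquot P f) <-> P = icpart f)]) /\
  (* (4) *)
  (exists (X Y : finType) (f : {set (X + Y)%type} -> int)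
          (PX : {set {set X}}) (PY : {set {set Y}}),
     [/\ boolf f, ES (restrL f) PX, ES (restrR f) PY & ~ ES f (dunion PX PY)]) /\
  (exists (X Y : finType) (f : {set (X + Y)%type} -> int)
          (PX : {set {set X}}) (PY : {set {set Y}}),
     [/\ boolf f, partition PX [set: X], partition PY [set: Y],
         ES f (dunion PX PY) & ~ ES (restrL f) PX]).
Proof.
split.
  move=> X Y f g f0 g0 P; exact: (part1 f0 g0 P).
split.
  move=> X f P P' f0 pP pP' r; exact: (part2 pP pP' r f0).
split.
  move=> X f f0; exact: (part3 f0).
split; [exact: ex1 | exact: ex2].
Qed.
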